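(* Assume (A1) and (A6) together with: (a) $M(1)\ge M(0)$ and $Y(1,1)\ge Y(0,m)$ for $m=0,1$; (b) for each $m\in\{0,1\}$, $A\perp\{Y(1,1),Y(0,m),M(1),M(0)\}\mid X$; (c) for each $m\in\{0,1\}$, $\{M(0),M(1)\}\perp Y(0,m)\mid X$; (d) there is $\epsilon>0$ with $P\{P(A=0,M=m\mid X)\ge\epsilon\}=1$ for $m=0,1$ and $P\{P(A=1,M=1\mid X)\ge\epsilon\}=1$. Then for (almost) every $x$, $$\delta(x) = \Big[1-\frac{\mu_{00}(x)}{\mu_{11}(x)}\Big]\Big[1-\frac{\gamma_0(x)}{\gamma_1(x)}\Big] + \Big[1-\frac{\mu_{01}(x)}{\mu_{11}(x)}\Big]\frac{\gamma_0(x)}{\gamma_1(x)}.$$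
   Context: Observed data $O=(X,A,M,Y)$ with covariates $X\in\mathbb{R}^d$, binary exposure $A$, binary mediator $M$, binary outcome $Y$. For $a,m\in\{0,1\}$, $Y(a,m)$ is the potential outcome under $A=a,M=m$, $M(a)$ the potential mediator, $Y(a):=Y(a,M(a))$, all on a common probability space with $O$. $\mu_{am}(x)=P(Y=1\mid A=a,M=m,X=x)$, $\gamma_a(x)=P(M=1\mid A=a,X=x)$. $\delta(x)=P(Y(0)=0\mid Y(1)=1,M(1)=1,X=x)$. (A1) consistency: $A=a,M=m\Rightarrow Y=Y(a,m)$ and $A=a\Rightarrow M=M(a)$. (A6) $P\{P(Y=1\mid A=1,M=1,X)\ge\epsilon\}=1$ for some $\epsilon>0$. *)

(* Defs.v *)
From HB Require Import structures.
From mathcomp Require Import all_boot all_order all_algebra.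
From mathcomp Require Import all_classical all_reals all_analysis.
Set Implicit Arguments. Unset Strict Implicit. Unset Printing Implicit Defensive.
Import Order.TTheory GRing.Theory Num.Theory.
Local Open Scope classical_set_scope.
Local Open Scope ring_scope.

(* [f] is a version of the conditional probability P(E | X), i.e.
   f is measurable and, for every measurable B of the covariate space,
   P(E /\ X \in B) = E[ f(X) ; X \in B ]. *)
Definition cprob_version {R : realType} {d : measure_display} {T : measurableType d}
  {dV : measure_display} {V : measurableType dV}
  (P : probability T R) (X : T -> V) (E : set T) (f : V -> R) : Prop :=
  measurable_fun setT f /\
  forall B : set V, measurable B ->
    P (E `&` X @^-1` B) = (\int[P]_(t in X @^-1` B) (f (X t))%:E)%E.

Definition cindep_ev {R : realType} {d : measure_display} {T : measurableType d}
  {dV : measure_display} {V : measurableType dV}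
  (P : probability T R) (X : T -> V) (E F : set T) : Prop :=
  forall fE fF fEF : V -> R,
    cprob_version P X E fE -> cprob_version P X F fF ->
    cprob_version P X (E `&` F) fEF ->
    {ae P, forall t, fEF (X t) = fE (X t) * fF (X t)}.

Definition cindep_rv {R : realType} {d : measure_display} {T : measurableType d}
  {dV : measure_display} {V : measurableType dV} {U W : Type}
  (P : probability T R) (X : T -> V) (u : T -> U) (w : T -> W) : Prop :=
  forall (a : U) (b : W), cindep_ev P X [set t | u t = a] [set t | w t = b].

(* Main.v *)
Require Import Defs.
From HB Require Import structures.
From mathcomp Require Import all_boot all_order all_algebra.
From mathcomp Require Import all_classical all_reals all_analysis.
From mathcomp Require Import measurable_realfun ring lra.
Import Order.TTheory GRing.Theory Num.Theory.
Local Open Scope classical_set_scope.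
Local Open Scope ring_scope.

Section gen.
Context (R : realType) (d : measure_display) (T : measurableType d)
  (P : probability T R) (dV : measure_display) (V : measurableType dV)
  (X : T -> V) (mX : measurable_fun setT X).

Let Xm : {mfun T >-> V} := HB.pack X (isMeasurableFun.Build _ _ _ _ _ mX).
Definition muX := distribution P Xm.

Section ev.
Variables (E : set T) (mE : measurable E).
Definition nuE : set V -> \bar R := fun B => P (E `&` X @^-1` B).

Let nuE0 : nuE set0 = 0%E.
Proof. by rewrite /nuE preimage_set0 setI0 measure0. Qed.

Let nuE_ge0 B : (0 <= nuE B)%E.
Proof. by apply: measure_ge0. Qed.

Let mpre B : measurable B -> measurable (X @^-1` B).
Proof. by move=> mB; rewrite -[X in measurable X]setTI; exact: mX. Qed.

Let nuE_sigma_additive : semi_sigma_additive nuE.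
Proof.
move=> F mF tF mUF; rewrite /nuE preimage_bigcup setI_bigcupr.
apply: measure_semi_sigma_additive.
- by move=> n; apply: measurableI => //; exact: mpre.
- apply/trivIsetP => /= i j _ _ ij.
  rewrite setIACA setIid -preimage_setI.
  by move/trivIsetP : tF => /(_ _ _ _ _ ij) ->//; rewrite preimage_set0 setI0.
- by rewrite -setI_bigcupr; apply: measurableI => //; rewrite -preimage_bigcup; exact: mpre.
Qed.

HB.instance Definition _ := isMeasure.Build _ _ _ nuE
  nuE0 nuE_ge0 nuE_sigma_additive.

Let fin_nuE : fin_num_fun nuE.
Proof.
move=> A mA; rewrite ge0_fin_numE//; apply: (@le_lt_trans _ _ 1%E).
  by rewrite -(probability_setT P); apply: le_measure => //; rewrite inE//;
    apply: measurableI => //; exact: mpre.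
by rewrite ltry.
Qed.

HB.instance Definition _ := @Measure_isFinite.Build _ V _ nuE fin_nuE.

Lemma nuE_dom : nuE `<< muX.
Proof.
apply/null_content_dominatesP => B mB.
rewrite /muX /distribution /pushforward /= => h.
apply/eqP; rewrite eq_le measure_ge0 andbT -h.
by apply: le_measure => //; rewrite inE//; [apply: measurableI => //|]; exact: mpre.
Qed.

Lemma RN_ex : exists r : V -> \bar R,
  [/\ forall x, (0 <= r x)%E, muX.-integrable [set: V] r &
      forall B, measurable B -> nuE B = (\int[muX]_(x in B) r x)%E].
Proof. exact: radon_nikodym_finite nuE_dom. Qed.

End ev.
Local Open Scope ereal_scope.

Lemma int_push (g : V -> \bar R) (B : set V) : measurable_fun setT g -> measurable B ->
  \int[muX]_(x in B) g x = \int[P]_(t in X @^-1` B) g (X t).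
Proof.
move=> mg mB; rewrite integralE [RHS]integralE.
have h1 := @ge0_integral_pushforward _ _ T V R X mX P B (g^\+) mB.
have h2 := @ge0_integral_pushforward _ _ T V R X mX P B (g^\-) mB.
rewrite /muX /distribution /=.
rewrite h1; last 2 first.
- exact/measurable_funepos/measurable_funTS.
- by move=> x _; exact: funepos_ge0.
rewrite h2; last 2 first.
- exact/measurable_funeneg/measurable_funTS.
- by move=> x _; exact: funeneg_ge0.
by rewrite -funepos_comp -funeneg_comp.
Qed.

Lemma ae_pull (Q : V -> Prop) : {ae muX, forall v, Q v} -> {ae P, forall t, Q (X t)}.
Proof.
case=> N [mN N0 QN]; exists (X @^-1` N); split.
- by rewrite -[X in measurable X]setTI; exact: mX.
- exact: N0.
- by move=> t /= nQ; apply: QN.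
Qed.

Definition ver (E : set T) (f : V -> R) := cprob_version P X E f.

Lemma ver_RN E f r : measurable E -> ver E f ->
  (forall x, 0 <= r x) -> muX.-integrable [set: V] r ->
  (forall B, measurable B -> nuE E B = \int[muX]_(x in B) r x) ->
  ae_eq muX setT r (fun v => (f v)%:E).
Proof.
move=> mE [mf fE] r0 ri rE; apply: integral_ae_eq => //.
- exact/measurable_EFinP.
- move=> B _ mB; rewrite -rE// int_push//; last exact/measurable_EFinP.
  by rewrite /nuE fE.
Qed.

Lemma mpreX (B : set V) : measurable B -> measurable (X @^-1` B).
Proof. by move=> mB; rewrite -[X in measurable X]setTI; exact: mX. Qed.

Lemma ver_int E f : measurable E -> ver E f ->
  P.-integrable setT (fun t => (f (X t))%:E).
Proof.
move=> mE vf; have [r [r0 ri rE]] := RN_ex _ mE.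
have h := ver_RN _ _ _ mE vf r0 ri rE.
case: vf => mf _.
apply/integrableP; split.
  by apply/measurable_EFinP; apply: measurableT_comp => //.
have := @ge0_integral_pushforward _ _ T V R X mX P setT (fun v => `|(f v)%:E|) measurableT.
rewrite preimage_setT => <- //; last first.
  by apply: measurableT_comp => //; exact/measurable_EFinP.
rewrite -/(muX).
have -> : \int[muX]_(x in setT) `|(f x)%:E| = \int[muX]_(x in setT) `|r x|.
  apply: ae_eq_integral => //.
  - by apply: measurableT_comp => //; exact/measurable_EFinP.
  - by apply: measurableT_comp => //; exact: measurable_int ri.
  - by apply: filterS h => v hv /hv ->.
by case/integrableP: ri.
Qed.

Lemma ver_ex E : measurable E -> exists f, ver E f.
Proof.
move=> mE; have [r [r0 ri rE]] := RN_ex _ mE.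
have mr : measurable_fun setT r by exact: measurable_int ri.
exists (fun v => fine (r v)); split.
  by apply: measurableT_comp => //; exact: fine_measurable.
move=> B mB.
rewrite -(int_push (fun v => (fine (r v))%:E))//; last first.
  by apply/measurable_EFinP; apply: measurableT_comp => //; exact: fine_measurable.
rewrite -/(nuE E B) rE//.
apply: ae_eq_integral => //.
- exact: measurable_funTS.
- apply: measurable_funTS; apply/measurable_EFinP.
  by apply: measurableT_comp => //; exact: fine_measurable.
- have := integrable_ae measurableT ri.
  by apply: filterS => v hv Bv; rewrite fineK// hv.
Qed.

Lemma ver_uniq E f g : measurable E -> ver E f -> ver E g ->
  {ae P, forall t, f (X t) = g (X t)}.
Proof.
move=> mE vf vg; have [r [r0 ri rE]] := RN_ex _ mE.
have h1 := ver_RN _ _ _ mE vf r0 ri rE.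
have h2 := ver_RN _ _ _ mE vg r0 ri rE.
apply: (ae_pull (fun v => f v = g v)).
apply: filterS2 h1 h2 => v h1 h2.
by have := h1 I; rewrite h2// => -[].
Qed.

Lemma ver_add E F f g : measurable E -> measurable F -> E `&` F = set0 ->
  ver E f -> ver F g -> ver (E `|` F) (fun v => (f v + g v)%R).
Proof.
move=> mE mF EF vf vg.
have fi := ver_int _ _ mE vf; have gi := ver_int _ _ mF vg.
case: vf => mf fE; case: vg => mg gE; split.
  exact: measurable_funD.
move=> B mB; rewrite setIUl measureU; [|by apply: measurableI => //; exact: mpreX
  |by apply: measurableI => //; exact: mpreX|by rewrite setIACA EF set0I].
transitivity (\int[P]_(t in X @^-1` B) (f (X t))%:E + \int[P]_(t in X @^-1` B) (g (X t))%:E).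
  by congr (_ + _); [exact: fE|exact: gE].
under [RHS]eq_integral do rewrite EFinD.
rewrite integralD//; first exact: mpreX.
- by apply: integrableS fi => //; exact: mpreX.
- by apply: integrableS gi => //; exact: mpreX.
Qed.

Lemma P_null_eq (A A' N : set T) : measurable A -> measurable A' -> measurable N ->
  P N = 0 -> A `|` N = A' `|` N -> P A = P A'.
Proof.
move=> mA mA' mN N0 e.
have nN : P.-null_set N by apply/measure0_null_setP.
have := (null_setU P mN).1 nN.
by move=> h; rewrite -(h A mA) e h.
Qed.

Lemma ver_aeq E F f : measurable E -> measurable F ->
  {ae P, forall t, E t <-> F t} -> ver E f -> ver F f.
Proof.
move=> mE mF [N [mN N0 sN]] [mf fE]; split => // B mB.
rewrite -fE//; apply: (@P_null_eq _ _ N _ _ mN N0).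
- by apply: measurableI => //; exact: mpreX.
- by apply: measurableI => //; exact: mpreX.
apply/seteqP; split => t [[Et Bt]|Nt]; try by right.
- have [Nt|Nn] := pselect (N t); first by right.
  left; split => //; have eF : E t <-> F t.
    by apply: contrapT => h; exact: Nn (sN t h).
  by apply/eF.
- have [Nt|Nn] := pselect (N t); first by right.
  left; split => //; have eF : E t <-> F t.
    by apply: contrapT => h; exact: Nn (sN t h).
  by apply/eF.
Qed.

Lemma ver0 : ver set0 (fun _ => 0%R).
Proof.
split => // B mB; rewrite set0I measure0.
by rewrite integral0.
Qed.


Lemma aeI {A B : T -> Prop} : {ae P, forall t, A t} -> {ae P, forall t, B t} ->
  {ae P, forall t, A t /\ B t}.
Proof. by move=> a b; apply/near_andP. Qed.

Lemma cindep_sym E F : cindep_ev P X E F -> cindep_ev P X F E.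
Proof.
move=> h fF fE fFE vF vE vFE; rewrite setIC in vFE.
have := h fE fF fFE vE vF vFE.
by apply: filterS => t ->; rewrite mulrC.
Qed.

Lemma cindep0 E : cindep_ev P X E set0.
Proof.
move=> fE fF fEF vE vF vEF; rewrite setI0 in vEF.
have h1 := ver_uniq _ _ _ measurable0 vF ver0.
have h2 := ver_uniq _ _ _ measurable0 vEF ver0.
by apply: filterS2 h1 h2 => t -> ->; rewrite mulr0.
Qed.

Lemma cindepU E F1 F2 : measurable E -> measurable F1 -> measurable F2 ->
  F1 `&` F2 = set0 -> cindep_ev P X E F1 -> cindep_ev P X E F2 ->
  cindep_ev P X E (F1 `|` F2).
Proof.
move=> mE m1 m2 d12 h1 h2 fE fF fEF vE vF vEF.
have [g1 v1] := ver_ex _ m1.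
have [g2 v2] := ver_ex _ m2.
have mE1 : measurable (E `&` F1) by exact: measurableI.
have mE2 : measurable (E `&` F2) by exact: measurableI.
have [k1 w1] := ver_ex _ mE1.
have [k2 w2] := ver_ex _ mE2.
have e1 := h1 _ _ _ vE v1 w1.
have e2 := h2 _ _ _ vE v2 w2.
have vF' := ver_add _ _ _ _ m1 m2 d12 v1 v2.
have u1 := ver_uniq _ _ _ (measurableU _ _ m1 m2) vF vF'.
have dE : (E `&` F1) `&` (E `&` F2) = set0 by rewrite setIACA setIid d12 setI0.
have vEF' := ver_add _ _ _ _ mE1 mE2 dE w1 w2.
rewrite -setIUr in vEF'.
have u2 := ver_uniq _ _ _ (measurableI _ _ mE (measurableU _ _ m1 m2)) vEF vEF'.
have := aeI (aeI u1 u2) (aeI e1 e2).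
by apply: filterS => t [[a b] [c e]]; rewrite b a c e mulrDr.
Qed.

Lemma meas_seq (W : eqType) (w : T -> W) :
  (forall b, measurable [set t | w t = b]) ->
  forall s : seq W, measurable [set t | w t \in s].
Proof.
move=> ml; elim => [|b s ms].
  by have -> : [set t | w t \in ([::] : seq W)] = set0 by apply/seteqP; split => t.
have -> : [set t | w t \in b :: s] = [set t | w t = b] `|` [set t | w t \in s].
  apply/seteqP; split => t /=; rewrite in_cons.
    by case/orP => [/eqP ->|]; [left|right].
  by case => [->|->]; rewrite ?eqxx ?orbT.
exact: measurableU.
Qed.

Lemma meas_pred (W : finType) (w : T -> W) :
  (forall b, measurable [set t | w t = b]) ->
  forall Q : pred W, measurable [set t | Q (w t)].
Proof.
move=> ml Q.
have -> : [set t | Q (w t)] = [set t | w t \in [seq x <- enum W | Q x]].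
  by apply/seteqP; split => t /=; rewrite mem_filter mem_enum andbT.
exact: meas_seq.
Qed.

Lemma cindep_seq (W : eqType) (w : T -> W) E : measurable E ->
  (forall b, measurable [set t | w t = b]) ->
  (forall b, cindep_ev P X E [set t | w t = b]) ->
  forall s : seq W, measurable [set t | w t \in s] /\ cindep_ev P X E [set t | w t \in s].
Proof.
move=> mE ml hl; elim => [|b s [ms hs]].
  have -> : [set t | w t \in ([::] : seq W)] = set0 by apply/seteqP; split => t.
  by split => //; exact: cindep0.
have [bs|bs] := boolP (b \in s).
  have -> : [set t | w t \in b :: s] = [set t | w t \in s].
    apply/seteqP; split => t /=; rewrite in_cons; last by move=> ->; rewrite orbT.
    by case/orP => // /eqP ->.
  by split.
have -> : [set t | w t \in b :: s] = [set t | w t = b] `|` [set t | w t \in s].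
  apply/seteqP; split => t /=; rewrite in_cons.
    by case/orP => [/eqP ->|]; [left|right].
  by case => [->|->]; rewrite ?eqxx ?orbT.
have d0 : [set t | w t = b] `&` [set t | w t \in s] = set0.
  by apply/seteqP; split => t //= [e]; rewrite e (negbTE bs).
split; first exact: measurableU.
exact: cindepU.
Qed.

Lemma cindep_pred (W : finType) (w : T -> W) E : measurable E ->
  (forall b, measurable [set t | w t = b]) ->
  (forall b, cindep_ev P X E [set t | w t = b]) ->
  forall Q : pred W, measurable [set t | Q (w t)] /\ cindep_ev P X E [set t | Q (w t)].
Proof.
move=> mE ml hl Q.
have -> : [set t | Q (w t)] = [set t | w t \in [seq x <- enum W | Q x]].
  by apply/seteqP; split => t /=; rewrite mem_filter mem_enum andbT.
exact: cindep_seq.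
Qed.

Lemma set_eqb (U : eqType) (u : T -> U) a : [set t | u t = a] = [set t | u t == a].
Proof. by apply/seteqP; split => t /= /eqP. Qed.

Lemma cindep_pred2 (U W : finType) (u : T -> U) (w : T -> W) :
  (forall a, measurable [set t | u t = a]) ->
  (forall b, measurable [set t | w t = b]) ->
  cindep_rv P X u w ->
  forall (Q1 : pred U) (Q2 : pred W),
    cindep_ev P X [set t | Q1 (u t)] [set t | Q2 (w t)].
Proof.
move=> mu mw h Q1 Q2.
have h1 a : cindep_ev P X [set t | Q2 (w t)] [set t | u t = a].
  by apply: cindep_sym; apply: (cindep_pred _ _ _ (mu a) mw (h a) Q2).2.
have mQ2 := meas_pred _ _ mw Q2.
by apply: cindep_sym; apply: (cindep_pred _ _ _ mQ2 mu h1 Q1).2.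
Qed.

End gen.

Arguments ver_ex {R d T P dV V X} mX {E}.
Arguments ver_uniq {R d T P dV V X} mX {E f g}.
Arguments ver_add {R d T P dV V X} mX {E F f g}.
Arguments ver_aeq {R d T P dV V X} mX {E F f}.
Arguments cindep_pred2 {R d T P dV V X} mX {U W u w}.
Arguments aeI {R d T P A B}.
Arguments set_eqb {d T U} u a.
Arguments meas_pred {d T W w}.

Lemma alg {R : realFieldType} {e e' q11 p11 p01 p00 q00 q01 pA1 pA0 gd g1 g0 n0 k00 k01 c00 c01 kk l gn : R} :
  0 < e -> 0 < e' -> e <= p00 -> e <= p01 -> e <= p11 -> e' <= q11 / p11 ->
  q11 = pA1 * gd -> p11 = pA1 * g1 -> p01 = pA0 * g0 -> p00 = pA0 * n0 ->
  q00 = pA0 * k00 -> q01 = pA0 * k01 -> k00 = n0 * c00 -> k01 = g0 * c01 ->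
  kk = l * c00 -> gd = gn + kk + k01 -> g1 = l + g0 ->
  gn / gd = (1 - q00 / p00 / (q11 / p11)) * (1 - (p01 / pA0) / (p11 / pA1))
     + (1 - q01 / p01 / (q11 / p11)) * ((p01 / pA0) / (p11 / pA1)).
Proof.
move=> e0 e0' h00 h01 h11 hq E1 E2 E3 E4 E5 E6 E7 E8 E9 E10 E11.
have nz x : e <= x -> x != 0 by move=> ex; rewrite gt_eqF// (lt_le_trans e0 ex).
have p11n := nz _ h11; have p00n := nz _ h00; have p01n := nz _ h01.
have qn : q11 / p11 != 0 by rewrite gt_eqF// (lt_le_trans e0' hq).
have pA1n : pA1 != 0 by apply: contra p11n; rewrite E2 => /eqP ->; rewrite mul0r.
have g1n : g1 != 0 by apply: contra p11n; rewrite E2 => /eqP ->; rewrite mulr0.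
have pA0n : pA0 != 0 by apply: contra p00n; rewrite E4 => /eqP ->; rewrite mul0r.
have n0n : n0 != 0 by apply: contra p00n; rewrite E4 => /eqP ->; rewrite mulr0.
have g0n : g0 != 0 by apply: contra p01n; rewrite E3 => /eqP ->; rewrite mulr0.
have gdn : gd != 0 by apply: contra qn; rewrite E1 => /eqP ->; rewrite mulr0 mul0r.
have gnE : gn = gd - (g1 - g0) * c00 - g0 * c01.
  by rewrite E10 E9 E8 E11; ring.
rewrite E1 E2 E3 E4 E5 E6 E7 E8 gnE.
field.
by rewrite gdn g1n pA1n pA0n n0n g0n.
Qed.

Lemma mlev (d : measure_display) (T : measurableType d) (f : T -> bool) b :
  measurable_fun setT f -> measurable [set t | f t = b].
Proof. by move=> mf; rewrite -[X in measurable X]setTI; exact: (mf measurableT [set b] I). Qed.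

Lemma ver_eq (R : realType) (d : measure_display) (T : measurableType d)
  (P : probability T R) (dV : measure_display) (V : measurableType dV)
  (X : T -> V) E F f : E = F -> cprob_version P X E f -> cprob_version P X F f.
Proof. by move=> ->. Qed.
Arguments ver_eq {R d T P dV V X} E F {f}.

Ltac bcase Mp Yp := repeat match goal with |- context[Mp ?a ?t] => case: (Mp a t) end;
  repeat match goal with |- context[Yp ?a ?m ?t] => case: (Yp a m t) end.

Theorem mainTheorem3 (R : realType) (d : measure_display) (T : measurableType d)
  (P : probability T R) (dV : measure_display) (V : measurableType dV)
  (X : T -> V) (A M Y : T -> bool) (Yp : bool -> bool -> T -> bool)
  (Mp : bool -> T -> bool)
  (p q : bool -> bool -> V -> R) (pA : bool -> V -> R) (gnum gden : V -> R) :
  measurable_fun setT X -> measurable_fun setT A -> measurable_fun setT M ->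
  measurable_fun setT Y -> (forall a m, measurable_fun setT (Yp a m)) ->
  (forall a, measurable_fun setT (Mp a)) ->
  (forall a m, cprob_version P X [set t | A t = a /\ M t = m] (p a m)) ->
  (forall a m, cprob_version P X [set t | Y t = true /\ A t = a /\ M t = m] (q a m)) ->
  (forall a, cprob_version P X [set t | A t = a] (pA a)) ->
  cprob_version P X
    [set t | Yp false (Mp false t) t = false /\ Yp true (Mp true t) t = true
             /\ Mp true t = true] gnum ->
  cprob_version P X [set t | Yp true (Mp true t) t = true /\ Mp true t = true] gden ->
  (forall t a m, A t = a -> M t = m -> Y t = Yp a m t) ->
  (forall t a, A t = a -> M t = Mp a t) ->
  (exists2 eps : R, 0 < eps & {ae P, forall t, eps <= q true true (X t) / p true true (X t)}) ->
  {ae P, forall t, Mp false t ==> Mp true t} ->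
  {ae P, forall t, forall m, Yp false m t ==> Yp true true t} ->
  (forall m, cindep_rv P X A (fun t => (Yp true true t, Yp false m t, Mp true t, Mp false t))) ->
  (forall m, cindep_rv P X (fun t => (Mp false t, Mp true t)) (Yp false m)) ->
  (exists2 eps : R, 0 < eps &
     {ae P, forall t, eps <= p false false (X t) /\ eps <= p false true (X t)
                      /\ eps <= p true true (X t)}) ->
  {ae P, forall t,
     gnum (X t) / gden (X t) =
       (1 - q false false (X t) / p false false (X t) / (q true true (X t) / p true true (X t)))
       * (1 - (p false true (X t) / pA false (X t)) / (p true true (X t) / pA true (X t)))
     + (1 - q false true (X t) / p false true (X t) / (q true true (X t) / p true true (X t)))
       * ((p false true (X t) / pA false (X t)) / (p true true (X t) / pA true (X t)))}.
Proof.
move=> mX mA mM mY mYp mMp vp vq vpA vgn vgd c1 c2 [e1 e1p ae1] mono1 mono2 hb hc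
  [e2 e2p ae2].
pose W5 t := (Yp true true t, Yp false false t, Yp false true t, Mp true t, Mp false t).
have mW5 b : measurable [set t | W5 t = b].
  case: b => [[[[b1 b2] b3] b4] b5].
  have -> : [set t | W5 t = (b1, b2, b3, b4, b5)] =
    [set t | Yp true true t = b1] `&` [set t | Yp false false t = b2] `&`
    [set t | Yp false true t = b3] `&` [set t | Mp true t = b4] `&` [set t | Mp false t = b5].
    apply/seteqP; split => t /=; rewrite /W5.
      by case=> -> -> -> -> ->.
    by case=> [[[[-> ->] ->] ->] ->].
  by repeat apply: measurableI; apply: mlev.
have mQ (Q : pred (bool * bool * bool * bool * bool)) : measurable [set t | Q (W5 t)].
  exact: meas_pred.
have mS m b : measurable [set t | (Yp true true t, Yp false m t, Mp true t, Mp false t) = b].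
  case: b => [[[b1 b2] b3] b4].
  have -> : [set t | (Yp true true t, Yp false m t, Mp true t, Mp false t) = (b1, b2, b3, b4)] =
    [set t | Yp true true t = b1] `&` [set t | Yp false m t = b2] `&`
    [set t | Mp true t = b3] `&` [set t | Mp false t = b4].
    apply/seteqP; split => t /=.
      by case=> -> -> -> ->.
    by case=> [[[-> ->] ->] ->].
  by repeat apply: measurableI; apply: mlev.
have mMM b : measurable [set t | (Mp false t, Mp true t) = b].
  case: b => [b1 b2].
  have -> : [set t | (Mp false t, Mp true t) = (b1, b2)] =
    [set t | Mp false t = b1] `&` [set t | Mp true t = b2].
    apply/seteqP; split => t /=.
      by case=> -> ->.
    by case=> -> ->.
  by apply: measurableI; apply: mlev.
have mAl a : measurable [set t | A t = a] by exact: mlev.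
have hB m a (Q : pred (bool * bool * bool * bool)) : cindep_ev P X [set t | A t = a]
    [set t | Q (Yp true true t, Yp false m t, Mp true t, Mp false t)].
  rewrite (set_eqb A a).
  exact: (cindep_pred2 mX mAl (mS m) (hb m) (fun x => x == a) Q).
have hC m (Q : pred (bool * bool)) b : cindep_ev P X [set t | Q (Mp false t, Mp true t)]
    [set t | Yp false m t = b].
  rewrite (set_eqb (Yp false m) b).
  exact: (cindep_pred2 mX mMM (fun b => @mlev _ _ _ b (mYp false m)) (hc m) Q (fun x => x == b)).
have ev_am a m : [set t | A t = a /\ M t = m] = [set t | A t = a] `&` [set t | Mp a t == m].
  apply/seteqP; split => t /=.
    by case=> ha hm; split => //; rewrite -(c2 t a ha) hm.
  by case=> ha /eqP hm; split => //; rewrite (c2 t a ha).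
have ev_yam a m : [set t | Y t = true /\ A t = a /\ M t = m] =
    [set t | A t = a] `&` [set t | Yp a m t && (Mp a t == m)].
  apply/seteqP; split => t /=.
    case=> hy [ha hm]; split => //.
    by rewrite -(c1 t a m ha hm) hy /= -(c2 t a ha) hm.
  case=> ha /andP[hy /eqP hm'].
  have hm : M t = m by rewrite (c2 t a ha).
  by split; [rewrite (c1 t a m ha hm)|split].
have vP a m := ver_eq _ _ (ev_am a m) (vp a m).
have vQ a m := ver_eq _ _ (ev_yam a m) (vq a m).
have vG11 : cprob_version P X [set t | Yp true true t && (Mp true t == true)] gden.
  apply: ver_eq vgd; apply/seteqP; split => t /=; bcase Mp Yp => //=; by case.
have [g1 vg1] : exists f, cprob_version P X [set t | Mp true t == true] f.
  exact: (ver_ex mX (mQ (fun s => s.1.2 == true))).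
have [g0 vg0] : exists f, cprob_version P X [set t | Mp false t == true] f.
  exact: (ver_ex mX (mQ (fun s => s.2 == true))).
have [n0 vn0] : exists f, cprob_version P X [set t | Mp false t == false] f.
  exact: (ver_ex mX (mQ (fun s => s.2 == false))).
have [k00 vk00] : exists f, cprob_version P X
    [set t | Yp false false t && (Mp false t == false)] f.
  exact: (ver_ex mX (mQ (fun s => s.1.1.1.2 && (s.2 == false)))).
have [k01 vk01] : exists f, cprob_version P X
    [set t | Yp false true t && (Mp false t == true)] f.
  exact: (ver_ex mX (mQ (fun s => s.1.1.2 && (s.2 == true)))).
have [c00 vc00] : exists f, cprob_version P X [set t | Yp false false t = true] f.
  exact: (ver_ex mX (mQ (fun s => s.1.1.1.2))).
have [c01 vc01] : exists f, cprob_version P X [set t | Yp false true t = true] f.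
  exact: (ver_ex mX (mQ (fun s => s.1.1.2))).
have mL : measurable [set t | (Mp false t == false) && (Mp true t == true)].
  exact: (mQ (fun s => (s.2 == false) && (s.1.2 == true))).
case: (ver_ex (P:=P) mX mL) => l vl.
have mK1 : measurable ([set t | (Mp false t == false) && (Mp true t == true)] `&`
                       [set t | Yp false false t = true]).
  by apply: measurableI => //; exact: (mQ (fun s => s.1.1.1.2)).
case: (ver_ex (P:=P) mX mK1) => kk vkk.
have i1 := hB false true (fun s => s.1.1.1 && (s.1.2 == true)) _ _ _ (vpA true) vG11 (vQ true true).
have i2 := hB false true (fun s => s.1.2 == true) _ _ _ (vpA true) vg1 (vP true true).
have i3 := hB false false (fun s => s.2 == true) _ _ _ (vpA false) vg0 (vP false true).
have i4 := hB false false (fun s => s.2 == false) _ _ _ (vpA false) vn0 (vP false false).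
have i5 := hB false false (fun s => s.1.1.2 && (s.2 == false)) _ _ _ (vpA false) vk00 (vQ false false).
have i6 := hB true false (fun s => s.1.1.2 && (s.2 == true)) _ _ _ (vpA false) vk01 (vQ false true).
have vk00' : cprob_version P X ([set t | Mp false t == false] `&` [set t | Yp false false t = true]) k00.
  by apply: ver_eq vk00; apply/seteqP; split => t /=; bcase Mp Yp => //=; by case.
have vk01' : cprob_version P X ([set t | Mp false t == true] `&` [set t | Yp false true t = true]) k01.
  by apply: ver_eq vk01; apply/seteqP; split => t /=; bcase Mp Yp => //=; by case.
have i7 := hC false (fun p => p.1 == false) true _ _ _ vn0 vc00 vk00'.
have i8 := hC true (fun p => p.1 == true) true _ _ _ vg0 vc01 vk01'.
have i9 := hC false (fun p => (p.1 == false) && (p.2 == true)) true _ _ _ vl vc00 vkk.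
pose Gn := [set t | Yp false (Mp false t) t = false /\ Yp true (Mp true t) t = true /\ Mp true t = true].
have eGn : Gn = [set t | ~~ (if Mp false t then Yp false true t else Yp false false t) &&
    Yp true true t && Mp true t].
  apply/seteqP; split => t; rewrite /Gn /=; bcase Mp Yp; intuition discriminate.
have mGn : measurable Gn.
  rewrite eGn; exact: (mQ (fun s => ~~ (if s.2 then s.1.1.2 else s.1.1.1.2) && s.1.1.1.1 && s.1.2)).
have mG01 : measurable [set t | Yp false true t && (Mp false t == true)].
  exact: (mQ (fun s => s.1.1.2 && (s.2 == true))).
have mG11 : measurable [set t | Yp true true t && (Mp true t == true)].
  exact: (mQ (fun s => s.1.1.1.1 && (s.1.2 == true))).
have dis1 : Gn `&` ([set t | (Mp false t == false) && (Mp true t == true)] `&`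
                       [set t | Yp false false t = true]) = set0.
  rewrite eGn; apply/seteqP; split => t //=; bcase Mp Yp; intuition discriminate.
have vU1 := ver_add mX mGn mK1 dis1 vgn vkk.
have dis2 : (Gn `|` ([set t | (Mp false t == false) && (Mp true t == true)] `&`
                       [set t | Yp false false t = true])) `&`
             [set t | Yp false true t && (Mp false t == true)] = set0.
  rewrite eGn; apply/seteqP; split => t //=; bcase Mp Yp; intuition discriminate.
have vU2 := ver_add mX (measurableU _ _ mGn mK1) mG01 dis2 vU1 vk01.
have ae10 : {ae P, forall t, ((Gn `|` ([set t | (Mp false t == false) && (Mp true t == true)] `&`
                       [set t | Yp false false t = true])) `|`
             [set t | Yp false true t && (Mp false t == true)]) t <->
             [set t | Yp true true t && (Mp true t == true)] t}.
  have := aeI mono1 mono2; apply: filterS => t [h1 h2].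
  move: h1 (h2 false) (h2 true); rewrite eGn /=; bcase Mp Yp; intuition discriminate.
have vU3 := ver_aeq mX (measurableU _ _ (measurableU _ _ mGn mK1) mG01) mG11 ae10 vU2.
have i10 := ver_uniq mX mG11 vG11 vU3.
have mF01 : measurable [set t | Mp false t == true] by exact: (mQ (fun s => s.2 == true)).
have mF11 : measurable [set t | Mp true t == true] by exact: (mQ (fun s => s.1.2 == true)).
have dis3 : [set t | (Mp false t == false) && (Mp true t == true)] `&`
    [set t | Mp false t == true] = set0.
  apply/seteqP; split => t //=; bcase Mp Yp; intuition discriminate.
have vL := ver_add mX mL mF01 dis3 vl vg0.
have ae11 : {ae P, forall t, ([set t | (Mp false t == false) && (Mp true t == true)] `|`
    [set t | Mp false t == true]) t <-> [set t | Mp true t == true] t}.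
  apply: filterS mono1 => t /=; bcase Mp Yp; intuition discriminate.
have vL' := ver_aeq mX (measurableU _ _ mL mF01) mF11 ae11 vL.
have i11 := ver_uniq mX mF11 vg1 vL'.
have := aeI ae1 (aeI ae2 (aeI i1 (aeI i2 (aeI i3 (aeI i4 (aeI i5 (aeI i6
  (aeI i7 (aeI i8 (aeI i9 (aeI i10 i11))))))))))).
apply: filterS => t [a1 [[a2 [a3 a4]] [j1 [j2 [j3 [j4 [j5 [j6 [j7 [j8 [j9 [j10 j11]]]]]]]]]]]].
exact: (alg e2p e1p a2 a3 a4 a1 j1 j2 j3 j4 j5 j6 j7 j8 j9 j10 j11).
Qed.
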